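(* There exists an absolute constant $c>0$ such that the following holds. Let $G$ be an abelian group, let $A\subseteq G$ be a finite nonempty set, and let $\kappa=|A+A|/|A|$. Then for each integer $s\ge 1$ there exists a subset $A_{(s)}\subseteq A$ with $|A_{(s)}|\le s$ such that \[ |A+A_{(s)}|\ge c\min(\kappa^{1/3},s)\,|A|. \]
   Context: For subsets $X,Y$ of an abelian group, $X+Y=\{x+y:x\in X,y\in Y\}$. *)

(* Defs.v *)
From HB Require Import structures.
From mathcomp Require Import all_boot all_algebra finmap.
From Stdlib Require Import Reals.
Set Implicit Arguments. Unset Strict Implicit. Unset Printing Implicit Defensive.
Local Open Scope fset_scope.

Definition sumset (G : zmodType) (X Y : {fset G}) : {fset G} :=
  [fset GRing.add x y | x in X, y in Y].

Definition doubling (G : zmodType) (A : {fset G}) : R :=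
  (INR #|` sumset A A| / INR #|` A|)%R.

(* Main.v *)
Require Import Defs.
From HB Require Import structures.
From mathcomp Require Import all_boot all_algebra finmap.
From mathcomp Require Import zify.
From Stdlib Require Import Reals.
From Stdlib Require Import Lra Psatz.
Local Open Scope fset_scope.
Set Implicit Arguments. Unset Strict Implicit.
Import GRing.Theory.

Section Comb.
Variable G : zmodType.
Local Notation "x \+g y" := (@GRing.add G x y) (at level 50, left associativity).
Local Notation "\-g x" := (@GRing.opp G x) (at level 35).

Lemma mem_sumset (Y Z : {fset G}) x :
  reflect (exists2 y, y \in Y & exists2 z, z \in Z & x = y \+g z) (x \in sumset Y Z).
Proof. exact: imfset2P. Qed.

Definition Bset (X A : {fset G}) a := [fset b in A | (a \+g b) \in X].

Lemma in_Bset X A a b : (b \in Bset X A a) = (b \in A) && ((a \+g b) \in X).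
Proof. by rewrite !inE. Qed.

Definition pairs (A : {fset G}) := [seq (a, a') | a <- A, a' <- A].
Definition rep (A : {fset G}) x :=
  nth (@GRing.zero G, @GRing.zero G) (pairs A) (find (fun p => p.1 \+g p.2 == x) (pairs A)).

Lemma repP A x : x \in sumset A A ->
  [/\ (rep A x).1 \in A, (rep A x).2 \in A & (rep A x).1 \+g (rep A x).2 = x].
Proof.
move=> /mem_sumset [a aA [a' a'A ->]].
have hs : has (fun p => p.1 \+g p.2 == a \+g a') (pairs A).
  by apply/hasP; exists (a, a') => //; apply/allpairsP; exists (a, a').
have := nth_find (@GRing.zero G, @GRing.zero G) hs; rewrite -/(rep A _) => /eqP ->.
have : rep A (a \+g a') \in pairs A by rewrite mem_nth // -has_find.
by case/allpairsP => -[b b'] /= [bA b'A ->].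
Qed.

Lemma sum_ge (T : eqType) (s : seq T) (f : T -> nat) m k :
  (forall i, i \in s -> m <= k * f i) -> size s * m <= k * \sum_(i <- s) f i.
Proof.
elim: s => [|x s IH] H; first by rewrite big_nil.
rewrite big_cons /= mulSn mulnDr leq_add //; first by apply: H; rewrite inE eqxx.
by apply: IH => i Hi; apply: H; rewrite inE Hi orbT.
Qed.

Definition Pset (X A : {fset G}) x : {fset G * G} :=
  [fset (b, bb) | b : G in Bset X A (rep A x).1, bb : G in (Bset X A (rep A x).2 `&` Bset X A b)].

Lemma card_Pset X A x :
  #|` Pset X A x| = \sum_(b <- Bset X A (rep A x).1) #|` Bset X A (rep A x).2 `&` Bset X A b|.
Proof.
rewrite card_fset_sum1 /Pset big_imfset2 /=.
  by apply: eq_bigr => b _; rewrite card_fset_sum1.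
by move=> [b1 b1'] [b2 b2'] _ _ /= [-> ->].
Qed.

Lemma Pset_ge X A x : x \in sumset A A ->
  (forall a, a \in A -> 2 * #|` A| < 3 * #|` Bset X A a|) ->
  2 * (#|` A| * #|` A|) < 9 * #|` Pset X A x|.
Proof.
move=> /repP [r1A r2A _] H; rewrite card_Pset.
have sub a : Bset X A a `<=` A by apply/fsubsetP => b; rewrite in_Bset => /andP[].
have h1 := H _ r1A; have h2 := H _ r2A.
have : size (Bset X A (rep A x).1) * (#|` A|.+1) <=
       3 * \sum_(b <- Bset X A (rep A x).1) #|` Bset X A (rep A x).2 `&` Bset X A b|.
  apply: sum_ge => b bB.
  have bA : b \in A by move: bB; rewrite in_Bset => /andP[].
  have hb := H _ bA.
  have hu := cardfsUI (Bset X A (rep A x).2) (Bset X A b).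
  have : #|` Bset X A (rep A x).2 `|` Bset X A b| <= #|` A|.
    by apply: fsubset_leq_card; rewrite fsubUset !sub.
  lia.
rewrite -/(#|` Bset X A (rep A x).1|) => h.
set S := #|` Bset X A (rep A x).1| in h h1 *.
set n := #|` A| in h h1 *.
set Sm := \sum_(_ <- _) _ in h *.
have e1 : (2 * n).+1 * n.+1 <= 3 * S * n.+1 by rewrite leq_mul2r h1 orbT.
have e2 : 2 * (n * n) < (2 * n).+1 * n.+1.
  nia.
have e3 : 3 * S * n.+1 <= 9 * Sm by rewrite -mulnA -[9]/(3*3) -mulnA leq_mul2l h.
by apply: (leq_trans e2); apply: (leq_trans e1).
Qed.

Definition prodf (T U : choiceType) (X : {fset T}) (Y : {fset U}) : {fset T * U} :=
  [fset z in [seq (u, v) | u <- X, v <- Y]].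

Lemma card_prodf (T U : choiceType) (X : {fset T}) (Y : {fset U}) :
  #|` prodf X Y| <= #|` X| * #|` Y|.
Proof. by rewrite /prodf card_fseq (leq_trans (size_undup _)) // size_allpairs. Qed.

Lemma in_prodf (T U : choiceType) (X : {fset T}) (Y : {fset U}) u v :
  u \in X -> v \in Y -> (u, v) \in prodf X Y.
Proof. by move=> uX vY; rewrite /prodf inE /=; apply/allpairsP; exists (u, v). Qed.

Definition Dom (X A : {fset G}) : {fset G * (G * G)} :=
  [fset (x, bb) | x : G in sumset A A, bb : G * G in Pset X A x].

Lemma card_Dom X A : #|` Dom X A| = \sum_(x <- sumset A A) #|` Pset X A x|.
Proof.
rewrite card_fset_sum1 /Dom big_imfset2 /=.
  by apply: eq_bigr => b _; rewrite card_fset_sum1.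
by move=> [b1 b1'] [b2 b2'] _ _ /= [-> ->].
Qed.

Definition Fm (A : {fset G}) (t : G * (G * G)) : G * (G * G) :=
  ((rep A t.1).1 \+g t.2.1, (t.2.1 \+g t.2.2, t.2.2 \+g (rep A t.1).2)).

Lemma tri (r1 b b' r2 : G) :
  r1 \+g r2 = (r1 \+g b) \+g \-g (b \+g b') \+g (b' \+g r2).
Proof. by rewrite opprD !addrA addrK addrNK. Qed.

Lemma key (X A : {fset G}) :
  (forall a, a \in A -> 2 * #|` A| < 3 * #|` Bset X A a|) ->
  2 * (#|` A| * #|` A|) * #|` sumset A A| <= 9 * (#|` X| * (#|` X| * #|` X|)).
Proof.
move=> H.
have h1 : #|` sumset A A| * (2 * (#|` A| * #|` A|)) <= 9 * #|` Dom X A|.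
  rewrite card_Dom; apply: sum_ge => x xAA; exact: ltnW (Pset_ge xAA H).
rewrite mulnC; apply: (leq_trans h1); rewrite leq_mul2l /=.
have inj : {in Dom X A &, injective (Fm A)}.
  move=> [x [b b']] [y [c c']] /imfset2P [x1 hx1 [bb1 _ e1]] /imfset2P [y1 hy1 [cc1 _ e2]].
  case: e1 => ex _; case: e2 => ey _; subst x1 y1.
  have hx := repP hx1; have hy := repP hy1.
  rewrite /Fm /= => [[e1 e2 e3]].
  have exy : x = y.
    case: hx => _ _ <-; case: hy => _ _ <-.
    by rewrite (tri (rep A x).1 b b' (rep A x).2) (tri (rep A y).1 c c' (rep A y).2) e1 e2 e3.
  subst y.
  by rewrite (addrI _ e1) (addIr _ e3).
move/card_in_imfsetP: inj => /eqP <-.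
apply: (leq_trans (fsubset_leq_card (B := prodf X (prodf X X)) _)).
  apply/fsubsetP => z /imfsetP [[x [b b']] /imfset2P [x1 hx1 [bb1 hbb e1]] ->].
  case: e1 => ex eb; subst x1 bb1.
  move: hbb => /imfset2P [b1 hb1 [b2 hb2 [e4 e5]]]; subst b1 b2.
  move: hb1; rewrite in_Bset => /andP [_ hb1].
  move: hb2; rewrite in_fsetI !in_Bset => /andP [/andP [_ hb2] /andP [_ hb3]].
  by rewrite /Fm /=; apply: in_prodf => //; apply: in_prodf => //; rewrite addrC.
apply: (leq_trans (card_prodf _ _)); rewrite leq_mul2l card_prodf orbT //.
Qed.

Lemma greedy (A : {fset G}) k : exists S : {fset G}, S `<=` A /\ #|` S| <= k /\
  (k * #|` A| <= 3 * #|` sumset A S| \/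
   2 * (#|` A| * #|` A|) * #|` sumset A A| <=
     9 * (#|` sumset A S| * (#|` sumset A S| * #|` sumset A S|))).
Proof.
elim: k => [|k [S [SA [Sk IH]]]].
  by exists fset0; rewrite fsub0set cardfs0; split => //; split => //; left.
case: IH => [IH|IH]; last first.
  by exists S; split => //; split; [apply: leqW | right].
set X := sumset A S in IH *.
case: (boolP (all (fun a => 2 * #|` A| < 3 * #|` Bset X A a|) A)) => [/allP hall|].
  by exists S; split => //; split; [apply: leqW | right; apply: key].
case/allPn => a aA /= ha.
have Bsub : Bset X A a `<=` A by apply/fsubsetP => b; rewrite in_Bset => /andP[].
set D := A `\` Bset X A a.
have cD : #|` D| = #|` A| - #|` Bset X A a| by rewrite cardfsDS.
have cB : #|` Bset X A a| <= #|` A| by apply: fsubset_leq_card.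
set Y := [fset b \+g a | b in D].
have cY : #|` Y| = #|` D|.
  by apply/eqP/card_in_imfsetP => b c _ _; apply: addIr.
exists (a |` S); split; first by rewrite fsubUset fsub1set aA SA.
split; first by rewrite cardfsU1 -addn1 addnC leq_add // leq_b1.
left.
have sX : X `<=` sumset A (a |` S).
  apply/fsubsetP => z /mem_sumset [u uA [v vS ->]].
  by apply/mem_sumset; exists u => //; exists v => //; rewrite inE vS orbT.
have sY : Y `<=` sumset A (a |` S).
  apply/fsubsetP => z /imfsetP [b bD ->].
  move: bD; rewrite in_fsetD => /andP [_ bA].
  by apply/mem_sumset; exists b => //; exists a => //; exact: fsetU11.
have dXY : X `&` Y = fset0.
  apply/fsetP => z; rewrite in_fsetI inE; apply/negbTE; apply/andP => -[zX /imfsetP [b bD ez]].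
  move: bD; rewrite in_fsetD in_Bset => /andP [hb bA].
  by move: hb; rewrite bA /= addrC -ez zX.
have hU := cardfsUI X Y; rewrite dXY cardfs0 addn0 in hU.
have hle : #|` X `|` Y| <= #|` sumset A (a |` S)| by apply: fsubset_leq_card; rewrite fsubUset sX sY.
rewrite mulSn. move: ha; rewrite -leqNgt => ha. rewrite cY cD in hU.
have e : #|` A| <= 3 * (#|` A| - #|` Bset X A a|) by move: ha cB; move: (#|` A|) (#|` Bset X A a|) => n0 B0; lia.
rewrite addnC; apply: (leq_trans (leq_add IH e)); rewrite -mulnDr leq_mul2l -hU hle orbT //.
Qed.
End Comb.

Lemma cube_lt (x y : R) : (0 <= x)%R -> (x < y)%R -> (x * x * x < y * y * y)%R.
Proof.
move=> hx hxy.
have hy : (0 < y)%R by lra.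
have h1 : (x * x <= y * y)%R by nra.
have h2 : (x * x * x <= x * x * y)%R by apply: Rmult_le_compat_l; nra.
have h3 : (x * x * y < y * y * y)%R.
  have : (x * x < y * y)%R by nra.
  move=> h; nra.
lra.
Qed.

Theorem theorem1p1 :
  exists c : R, (0 < c)%R /\
    forall (G : zmodType) (A : {fset G}), A != fset0 ->
    forall s : nat, (1 <= s)%N ->
      exists As : {fset G}, As `<=` A /\ (#|` As| <= s)%N /\
        (c * Rmin (Rpower (doubling A) (1/3)) (INR s) * INR #|` A|
           <= INR #|` sumset A As|)%R.
Proof.
exists (1/3)%R; split; first by lra.
move=> G A HA s Hs.
have [S [SA [Sk H]]] := greedy A s.
exists S; split => //; split => //.
have nA : (0 < #|` A|)%N by rewrite cardfs_gt0.
have [a aA] := fset0Pn _ HA.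
have nAA : (0 < #|` sumset A A|)%N.
  rewrite cardfs_gt0; apply/fset0Pn; exists (GRing.add a a).
  by apply/mem_sumset; exists a => //; exists a.
have nR : (0 < INR #|` A|)%R by apply: lt_0_INR; apply/ltP.
have KR : (0 < INR #|` sumset A A|)%R by apply: lt_0_INR; apply/ltP.
have XR : (0 <= INR #|` sumset A S|)%R by apply: pos_INR.
have e3 : INR 3 = 3%R by simpl; lra.
have e2 : INR 2 = 2%R by simpl; lra.
have e9 : INR 9 = 9%R by simpl; lra.
set n := INR #|` A| in nR *.
set K := INR #|` sumset A A| in KR *.
set X := INR #|` sumset A S| in XR *.
set t := Rpower (doubling A) (1/3).
have tpos : (0 < t)%R by rewrite /t /Rpower; apply: exp_pos.
case: H => H.
  have /le_INR : (s * #|` A| <= 3 * #|` sumset A S|)%coq_nat by apply/leP.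
  rewrite !mult_INR e3 -/n -/X => H'.
  have := Rmin_r t (INR s); have := pos_INR s; nra.
have /le_INR : (2 * (#|` A| * #|` A|) * #|` sumset A A| <=
   9 * (#|` sumset A S| * (#|` sumset A S| * #|` sumset A S|)))%coq_nat by apply/leP.
rewrite !mult_INR e2 e9 -/n -/X -/K => H'.
have ht : (t * t * t = K / n)%R.
  rewrite /t -!Rpower_plus.
  replace (1/3 + 1/3 + 1/3)%R with 1%R by field.
  rewrite Rpower_1 //; rewrite /doubling -/n -/K.
  by apply: Rdiv_lt_0_compat.
have hm := Rmin_l t (INR s).
have hK : (K = t * t * t * n)%R by rewrite ht; field; lra.
case: (Rle_lt_dec (1/3 * t * n) X) => hX.
  nra.
have := cube_lt XR hX; rewrite hK in H'.
have ttt : (0 < t * t * t)%R by nra.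
nra.
Qed.
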